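(* Let $q$ be a prime with $q \equiv 3 \pmod 8$ (there are infinitely many such primes). Let $n \geq 1$ be an integer, $v = 3q^n$, and $k$ an odd positive integer. Then there are no integers $a_1, \ldots, a_k$ with $1 \leq a_j < v$ such that $\prod_{j=1}^k a_j = \prod_{j=1}^k (v - a_j)$. *)

(* Defs.v *)
From mathcomp Require Import all_boot.

(* Main.v *)
Require Import Defs.
From mathcomp Require Import all_boot all_algebra zify ring.
Module Aux.
Import GRing.Theory.
Local Open Scope ring_scope.

Section Gauss.
Variable q : nat.
Hypothesis pq : prime q.
Hypothesis q8 : (q %% 8 = 3)%N.
Local Notation F := 'F_q.

Lemma qchar : q \in [pchar F]. Proof. exact: pchar_Fp. Qed.
Lemma natF0 (x : nat) : (x%:R == 0 :> F) = (q %| x)%N.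
Proof. by rewrite (dvdn_pcharf qchar). Qed.

Let t := (q %/ 8)%N.
Lemma qE : q = (8 * t + 3)%N.
Proof. rewrite /t {1}(divn_eq q 8) q8; lia. Qed.
Let m := (q./2)%N.
Lemma mE : m = (4 * t + 1)%N.
Proof. rewrite /m qE; lia. Qed.

Definition r (i : nat) : nat := if (2 * i.+1 <= m)%N then (2 * i.+1)%N else (q - 2 * i.+1)%N.

Lemma r_range i : (i < m)%N -> (0 < r i <= m)%N.
Proof. move=> him; have := qE; have := mE; rewrite /r; case: ifP => h; lia. Qed.

Lemma r_inj i j : (i < m)%N -> (j < m)%N -> r i = r j -> i = j.
Proof.
move=> hi hj; have := qE; have := mE; rewrite /r; case: ifP => h1; case: ifP => h2; lia.
Qed.

Definition h (i : 'I_m) : 'I_m.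
Proof. refine (@Ordinal m (r i).-1 _). have := @r_range i (ltn_ord i). lia. Defined.

Lemma h_inj : injective h.
Proof.
move=> i j /(congr1 val) /= e; apply: val_inj; apply: r_inj => //; move: e; rewrite /h /=; rewrite ?ltn_ord //.
have := @r_range i (ltn_ord i); have := @r_range j (ltn_ord j); lia.
Qed.

Lemma two_pow : (2%:R : F) ^+ m = -1.
Proof.
set P := \prod_(i < m) (i.+1)%:R : F.
have P0 : P != 0.
  apply/prodf_neq0 => i _; rewrite natF0.
  apply/negP => /dvdn_leq => /(_ isT). have := ltn_ord i; have := qE; have := mE; lia.
have A : \prod_(i < m) (r i)%:R = P :> F.
  rewrite /P [RHS](reindex_inj h_inj) /=; apply: eq_bigr => i _ /=.
  rewrite /h /=; have := @r_range i (ltn_ord i); by case: (r i).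
have B : forall i : 'I_m, (r i)%:R = (if (2 * i.+1 <= m)%N then 1 else -1) * (2 * i.+1)%:R :> F.
  move=> i; rewrite /r; case: ifP => hh; first by rewrite mul1r.
  rewrite natrB; last by have := ltn_ord i; have := qE; have := mE; lia.
  have -> : (q%:R : F) = 0 by apply/eqP; rewrite natF0 dvdnn.
  by rewrite sub0r mulN1r.
rewrite (eq_bigr _ (fun i _ => B i)) big_split /= in A.
have S : \prod_(i < m) (if (2 * i.+1 <= m)%N then 1 else -1) = (-1) ^+ (2 * t + 1) :> F.
  rewrite -(big_mkord xpredT (fun i => if (2 * i.+1 <= m)%N then 1 else -1 : F)).
  rewrite (big_cat_nat _ (n := (2 * t)%N)) /=; last by rewrite mE; lia. 2: done.
  rewrite (eq_big_nat _ _ (F2 := fun _ => 1)); last by move=> i hi; rewrite ifT //; rewrite mE; lia.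
  rewrite (eq_big_nat _ _ (F2 := fun _ => -1) (m := (2 * t)%N)); last by move=> i hi; rewrite ifF //; rewrite mE; lia.
  rewrite !prodr_const_nat expr1n mul1r mE; congr (_ ^+ _); lia.
have T : \prod_(i < m) (2 * i.+1)%:R = 2%:R ^+ m * P :> F.
  rewrite /P (eq_bigr (fun i : 'I_m => 2%:R * (i.+1)%:R)); last by move=> i _; rewrite natrM.
  by rewrite big_split /= prodr_const card_ord.
rewrite S T mulrA in A.
have E : (-1) ^+ (2 * t + 1) * 2%:R ^+ m = 1 :> F.
  by apply: (mulIf P0); rewrite mul1r.
have N1 : (-1) ^+ (2 * t + 1) = -1 :> F.
  by rewrite -signr_odd addnC oddD oddM andFb.
by rewrite N1 mulN1r in E; rewrite -[LHS]opprK E.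
Qed.

Lemma q3 : (3 <= q)%N. Proof. have := qE; lia. Qed.
Lemma m_odd : odd m. Proof. by rewrite mE addn1 /= oddM. Qed.

Definition g (x : nat) : F := ((x`_(q^'))%:R) ^+ m.

Lemma ndvd_small y : (0 < y < q)%N -> ~~ (q %| y)%N.
Proof. move=> /andP[h1 h2]; by apply/negP => /(dvdn_leq h1); lia. Qed.

Lemma partq f y : (0 < y)%N -> ~~ (q %| y)%N -> ((q ^ f * y)`_(q^'))%N = y.
Proof.
move=> y0 yq; rewrite partnM ?expn_gt0 ?(prime_gt0 pq) //.
rewrite part_p'nat ?mul1n; last by rewrite pnatNK pnatX pnat_id.
by rewrite part_pnat_id ?p'natE.
Qed.

Lemma gM x y : (0 < x)%N -> (0 < y)%N -> g (x * y) = g x * g y.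
Proof. by move=> hx hy; rewrite /g partnM // natrM exprMn. Qed.

Lemma g1 : g 1 = 1.
Proof. by rewrite /g partn1 expr1n. Qed.

Lemma g_neq0 x : (0 < x)%N -> g x != 0.
Proof.
move=> x0; rewrite /g expf_neq0 // natF0 -p'natE //; exact: part_pnat.
Qed.

Lemma g_neg n a : (1 <= n)%N -> (1 <= a < 3 * q ^ n)%N -> g (3 * q ^ n - a)%N = - g a.
Proof.
move=> n1 /andP[a1 av].
set f := logn q a; set b := (a`_(q^'))%N.
have ha : a = (q ^ f * b)%N by rewrite /f /b -p_part partnC.
have hb0 : (0 < b)%N by apply: part_gt0.
have hbq : ~~ (q %| b)%N by rewrite -p'natE //; exact: part_pnat.
have ga : g a = b%:R ^+ m by [].
have qg1 := prime_gt1 pq.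
have hf : (f <= n)%N.
  rewrite -ltnS -(ltn_exp2l _ _ qg1) expnS.
  apply: (leq_ltn_trans (n := a)); first by rewrite ha leq_pmulr.
  apply: (leq_trans av); rewrite leq_mul2r q3 orbT //.
have mo := m_odd.
move: hf; rewrite leq_eqVlt => /orP[/eqP efn | lfn].
  have hb3 : (b < 3)%N.
    by move: av; rewrite ha efn mulnC ltn_pmul2r // expn_gt0 prime_gt0.
  have hq2 : ~~ (q %| 2)%N by apply: ndvd_small; have := q3; lia.
  have hq1 : ~~ (q %| 1)%N by apply: ndvd_small; have := q3; lia.
  rewrite ga ha efn.
  have : b = 1%N \/ b = 2%N by lia.

  set Q := (q ^ n)%N.
  case=> ->.
    have -> : (3 * Q - Q * 1 = Q * 2)%N by lia.
    by rewrite /g (partq _ _ _ hq2) // two_pow expr1n.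
  have -> : (3 * Q - Q * 2 = Q * 1)%N by lia.
  by rewrite /g (partq _ _ _ hq1) // two_pow expr1n opprK.
have e : (3 * q ^ n = q ^ f * (3 * q ^ (n - f)))%N.
  by rewrite mulnCA -expnD subnKC // ltnW.
have hbc : (b < 3 * q ^ (n - f))%N.
  by move: av; rewrite e ha ltn_pmul2l // expn_gt0 prime_gt0.
set c := (3 * q ^ (n - f) - b)%N.
have hc0 : (0 < c)%N by rewrite subn_gt0.
have hqd : (q %| 3 * q ^ (n - f))%N.
  by rewrite dvdn_mull // dvdn_exp ?subn_gt0 // dvdnn.
have hcq : ~~ (q %| c)%N.
  apply/negP => qc; move/negP: hbq; apply.
  by rewrite -(dvdn_addr _ qc) /c subnK // ltnW.
rewrite e [X in g (_ - X)]ha -mulnBr.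
rewrite ga.
rewrite /g.
rewrite (partq f (3 * q ^ (n - f) - b)%N hc0 hcq).
rewrite (natrB _ (ltnW hbc)).
have -> : ((3 * q ^ (n - f))%:R : F) = 0 by apply/eqP; rewrite natF0.
by rewrite sub0r exprNn -signr_odd mo mulN1r.
Qed.

Lemma g_prod k (G : 'I_k -> nat) : (forall j, 0 < G j)%N ->
  g (\prod_(j < k) G j) = \prod_(j < k) g (G j).
Proof.
move=> hG.
suff : (0 < \prod_(j < k) G j)%N /\ g (\prod_(j < k) G j) = \prod_(j < k) g (G j) by case.
apply: (big_ind2 (fun x y => (0 < x)%N /\ g x = y)).
- by split; [|exact: g1].
- by move=> x1 x2 y1 y2 [h1 <-] [h2 <-]; split; [rewrite muln_gt0 h1 h2 | rewrite gM].
- by move=> j _; split.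
Qed.

Lemma main n k : (1 <= n)%N -> odd k ->
  ~ (exists a : 'I_k -> nat,
       (forall j, 1 <= a j < 3 * q ^ n)%N /\
       (\prod_(j < k) a j = \prod_(j < k) (3 * q ^ n - a j))%N).
Proof.
move=> n1 ko [a [ha he]].
have hpos : forall j, (0 < a j)%N by move=> j; case/andP: (ha j).
have hpos' : forall j, (0 < 3 * q ^ n - a j)%N by move=> j; case/andP: (ha j) => _; rewrite subn_gt0.
have := congr1 g he; rewrite !g_prod //.
rewrite [X in _ = X -> _](eq_bigr (fun j => - g (a j))); last by move=> j _; rewrite g_neg.
rewrite prodrN card_ord -signr_odd ko mulN1r.
set P := \prod_(j < k) g (a j).
have P0 : P != 0 by apply/prodf_neq0 => j _; apply: g_neq0.
move=> /eqP; rewrite -addr_eq0 -mulr2n -mulr_natl mulf_eq0 (negPf P0) orbF natF0.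
by apply/negP/ndvd_small; have := q3; lia.
Qed.
End Gauss.
End Aux.

Theorem corollary4p13 (q n k : nat) :
  prime q -> q %% 8 = 3 -> 1 <= n -> odd k ->
  ~ (exists a : 'I_k -> nat,
       (forall j, 1 <= a j < 3 * q ^ n) /\
       \prod_(j < k) a j = \prod_(j < k) (3 * q ^ n - a j)).
Proof.
move=> pq q8 n1 ko; exact: (@Aux.main q pq q8 n k n1 ko).
Qed.
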